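(* Let $\mathfrak g$ be a nilpotent Lie algebra of nilindex $3$ (i.e. $\mathfrak g^3=0$) over a field of characteristic zero, let $\mathcal F_\bullet\mathfrak g$ be its standard filtration $\mathcal F_n\mathfrak g=\mathfrak g^n$, and let $R:\mathfrak g\to\mathfrak g$ be a Rota–Baxter operator of weight 1 preserving the filtration. Then the Rota–Baxter operator $\mathfrak R(x)=\log(\widehat{\mathcal R}(\exp(x)))$ on the group $(\mathfrak g,* )$ is given by $$\mathfrak R(x)=R(x)-\tfrac12 R([R(x),x]),\qquad x\in\mathfrak g.$$
   Context: $\mathfrak g^1=\mathfrak g$, $\mathfrak g^n=[\mathfrak g,\mathfrak g^{n-1}]$. Rota–Baxter operator of weight 1: linear $R$ with $[R(x),R(y)]=R([R(x),y]+[x,R(y)]+[x,y])$. Since $\mathfrak g$ is nilpotent, $\mathfrak g$ with the standard filtration is complete, so $\widehat{\mathfrak g}=\mathfrak g$. Filtration of $U(\mathfrak g)$: $\mathcal F_0U=U(\mathfrak g)$, $\mathcal F_nU$ spanned by $x_1\cdots x_k$ with $x_i\in\mathcal F_{n_i}\mathfrak g$, $\sum n_i\ge n$; $\widehat U(\mathfrak g)=\varprojlim U(\mathfrak g)/\mathcal F_nU(\mathfrak g)$ is a complete Hopf algebra containing $\mathfrak g$. $\mathcal R:U(\mathfrak g)\to U(\mathfrak g)$ is the linear map with $\mathcal R(1)=1$, $\mathcal R(x)=R(x)$, $\mathcal R(xh)=R(x)\mathcal R(h)-\mathcal R([R(x),h])$; it preserves the filtration and induces $\widehat{\mathcal R}$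 on $\widehat U(\mathfrak g)$. $\exp(x)=\sum_n x^n/n!$ is a bijection from $\mathfrak g$ onto the group $\mathbb G$ of nonzero group-like elements of $\widehat U(\mathfrak g)$, with inverse $\log$; $\widehat{\mathcal R}(\mathbb G)\subset\mathbb G$. The group $(\mathfrak g,* )$ is given by $x*y=\log(\exp(x)\exp(y))$, which here equals $x+y+\frac12[x,y]$. *)

(* Defs.v *)
From HB Require Import structures.
From mathcomp Require Import all_boot all_order all_algebra.
Set Implicit Arguments. Unset Strict Implicit. Unset Printing Implicit Defensive.
Import Order.TTheory GRing.Theory Num.Theory.
Local Open Scope ring_scope.

Definition is_lie_bracket (K : fieldType) (g : lmodType K) (br : g -> g -> g) : Prop :=
  [/\ (forall (a : K) x y z, br (a *: x + y) z = a *: br x z + br y z),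
      (forall (a : K) x y z, br z (a *: x + y) = a *: br z x + br z y),
      (forall x, br x x = 0) &
      (forall x y z, br x (br y z) + br y (br z x) + br z (br x y) = 0)].

(* Since the bracket is
   bilinear, the span of the brackets is the set of finite sums of brackets. *)
Fixpoint lcs (K : fieldType) (g : lmodType K) (br : g -> g -> g) (n : nat) (x : g) : Prop :=
  match n with
  | 0 | 1 => True
  | m.+1 => exists s : seq (g * g),
      (forall p, p \in s -> lcs br m p.2) /\ x = \sum_(p <- s) br p.1 p.2
  end.

Definition rota_baxter1 (K : fieldType) (g : lmodType K) (br : g -> g -> g) (R : g -> g) : Prop :=
  (forall (a : K) x y, R (a *: x + y) = a *: R x + R y) /\
  (forall x y, br (R x) (R y) = R (br (R x) y + br x (R y) + br x y)).

Definition lie_map (K : fieldType) (g : lmodType K) (br : g -> g -> g)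
  (A : algType K) (f : g -> A) : Prop :=
  (forall (a : K) x y, f (a *: x + y) = a *: f x + f y) /\
  (forall x y, f (br x y) = f x * f y - f y * f x).

Definition alg_morph (K : fieldType) (A B : algType K) (phi : A -> B) : Prop :=
  [/\ (forall (a : K) u v, phi (a *: u + v) = a *: phi u + phi v),
      (forall u v, phi (u * v) = phi u * phi v) & phi 1 = 1].

Definition is_envelope (K : fieldType) (g : lmodType K) (br : g -> g -> g)
  (U : algType K) (iota : g -> U) : Prop :=
  lie_map br iota /\
  forall (A : algType K) (f : g -> A), lie_map br f ->
    (exists phi : U -> A, alg_morph phi /\ forall x, phi (iota x) = f x) /\
    (forall phi1 phi2 : U -> A, alg_morph phi1 -> alg_morph phi2 ->
       (forall x, phi1 (iota x) = f x) -> (forall x, phi2 (iota x) = f x) ->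
       forall u, phi1 u = phi2 u).

(* Filtration of U(g): F_n U is spanned by products iota x_1 ... iota x_k with
   x_i in F_{n_i} g and n_1 + ... + n_k >= n. *)
Definition filtU (K : fieldType) (g : lmodType K) (br : g -> g -> g)
  (U : algType K) (iota : g -> U) (n : nat) (u : U) : Prop :=
  exists s : seq (K * seq (nat * g)),
    (forall w, w \in s ->
       (forall p, p \in w.2 -> lcs br p.1 p.2) /\ (n <= \sum_(p <- w.2) p.1)%N) /\
    u = \sum_(w <- s) w.1 *: \prod_(p <- w.2) iota p.2.

Definition RB_ext (K : fieldType) (g : lmodType K) (U : algType K) (iota : g -> U)
  (R : g -> g) (RR : U -> U) : Prop :=
  [/\ (forall (a : K) u v, RR (a *: u + v) = a *: RR u + RR v),
      RR 1 = 1,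
      (forall x, RR (iota x) = iota (R x)) &
      (forall x h, RR (iota x * h) =
         iota (R x) * RR h - RR (iota (R x) * h - h * iota (R x)))].

Definition exp_trunc (K : fieldType) (U : algType K) (n : nat) (u : U) : U :=
  \sum_(k < n) (k`!%:R : K)^-1 *: u ^+ k.

(* Main.v *)
Require Import Defs.
From HB Require Import structures.
From mathcomp Require Import all_boot all_order all_algebra.
From mathcomp Require Import zify.
Set Implicit Arguments. Unset Strict Implicit. Unset Printing Implicit Defensive.
Import Order.TTheory GRing.Theory Num.Theory.
Local Open Scope ring_scope.

Section Comb.
Variables (K : fieldType) (U : algType K) (b e : U).
Hypothesis hK : [pchar K] =i pred0.
Hypothesis hbe : GRing.comm b e.

Lemma natK_neq0 n : n != 0%N -> (n%:R : K) != 0.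
Proof. by move=> hn; rewrite ((pcharf0P K).1 hK). Qed.

Definition H i j : U := ((i`! * j`!)%:R : K)^-1 *: (b ^+ i * e ^+ j).

Lemma bH i j : b * H i j = H i.+1 j *+ i.+1.
Proof.
rewrite /H -scalerAr mulrA -exprS -scaler_nat scalerA; congr (_ *: _).
rewrite factS -mulnA (natrM _ i.+1) invfM mulrA mulfV ?mul1r //; exact: natK_neq0.
Qed.

Lemma eH i j : e * H i j = H i j.+1 *+ j.+1.
Proof.
rewrite /H -scalerAr mulrA (commrX i (commr_sym hbe)) -mulrA -exprS.
rewrite -scaler_nat scalerA; congr (_ *: _).
rewrite factS mulnCA (natrM _ j.+1) invfM mulrA mulfV ?mul1r //; exact: natK_neq0.
Qed.

Definition Dg w N k : U :=
  \sum_(i < N) \sum_(j < N) (if (i + w * j == k)%N then H i j else 0).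

Lemma sum_shift N (G : nat -> U) : G 0%N = 0 -> G N = 0 ->
  \sum_(i < N) G i.+1 = \sum_(i < N) G i.
Proof.
move=> h0 hN; transitivity (\sum_(i < N.+1) G i).
  by rewrite big_ord_recl h0 add0r.
by rewrite big_ord_recr /= hN addr0.
Qed.

Lemma mulbD w N k : (k.+1 < N)%N -> b * Dg w N k =
  \sum_(i < N) \sum_(j < N) (if (i + w * j == k.+1)%N then H i j *+ i else 0).
Proof.
move=> hk; rewrite /Dg mulr_sumr.
rewrite -(@sum_shift N (fun i => \sum_(j < N) (if (i + w * j == k.+1)%N then H i j *+ i else 0))).
- apply eq_bigr => i _; rewrite mulr_sumr; apply eq_bigr => j _.
  rewrite addSn eqSS; case: ifP => _; [by rewrite bH | by rewrite mulr0].
- by apply: big1 => j _; rewrite mulr0n if_same.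
- apply: big1 => j _; rewrite ifF //; apply/negbTE/eqP; lia.
Qed.

Lemma muleD w N k : (0 < w)%N -> (k + w < N)%N -> e * Dg w N k =
  \sum_(i < N) \sum_(j < N) (if (i + w * j == k + w)%N then H i j *+ j else 0).
Proof.
move=> hw hk; rewrite /Dg mulr_sumr; apply eq_bigr => i _; rewrite mulr_sumr.
rewrite -(@sum_shift N (fun j => if (i + w * j == k + w)%N then H i j *+ j else 0)).
- apply eq_bigr => j _.
  rewrite mulnS (addnC w) addnA eqn_add2r; case: ifP => _; [by rewrite eH | by rewrite mulr0].
- by rewrite mulr0n if_same.
- rewrite ifF //; apply/negbTE/eqP; nia.
Qed.

Lemma D1S N k : (k.+1 < N)%N -> (b + e) * Dg 1 N k = Dg 1 N k.+1 *+ k.+1.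
Proof.
move=> hk; rewrite mulrDl mulbD // muleD ?addn1 // -big_split /= /Dg -sumrMnl.
apply eq_bigr => i _; rewrite -big_split -sumrMnl /=; apply eq_bigr => j _.
case: ifP => h; last by rewrite addr0 mul0rn.
rewrite -mulrnDr; congr (_ *+ _); move/eqP: h; lia.
Qed.

Lemma D2S N k : (k.+2 < N)%N ->
  b * Dg 2 N k.+1 + (e * Dg 2 N k) *+ 2 = Dg 2 N k.+2 *+ k.+2.
Proof.
move=> hk; rewrite mulbD // muleD ?addn2 // -sumrMnl -big_split /= /Dg -sumrMnl.
apply eq_bigr => i _; rewrite -sumrMnl -big_split -sumrMnl /=; apply eq_bigr => j _.
case: ifP => h; last by rewrite mul0rn addr0 mul0rn.
rewrite -mulrnA -mulrnDr; congr (_ *+ _); move/eqP: h; lia.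
Qed.

Lemma D0 w N : (0 < w)%N -> (0 < N)%N -> Dg w N 0 = 1.
Proof.
move=> hw; rewrite /Dg; case: N => // N _.
rewrite big_ord_recl [X in _ + X]big1 ?addr0; last first.
  by move=> i _; apply: big1.
rewrite big_ord_recl [X in _ + X]big1 ?addr0; last first.
  move=> j _; rewrite ifF //; apply/negbTE/eqP; rewrite lift0 /=; nia.
by rewrite /= muln0 /H expr0 mulr1 invr1 scale1r.
Qed.

Lemma D2_1 N : (1 < N)%N -> Dg 2 N 1 = b.
Proof.
move=> hN; rewrite -[RHS]mulr1 -(@D0 2 N) //; last lia. rewrite (@mulbD 2 N 0) //.
rewrite /Dg; apply eq_bigr => i _; apply eq_bigr => j _.
case: ifP => // /eqP h; have -> : (i : nat) = 1%N by lia.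
by rewrite mulr1n.
Qed.

Lemma powbe N k : (k < N)%N -> (b + e) ^+ k = Dg 1 N k *+ k`!.
Proof.
elim: k => [|k IH] hk; first by rewrite expr0 D0 // mulr1n.
rewrite exprS IH ?(ltnW hk) // mulrnAr D1S // factS mulrnA.
by [].
Qed.

Lemma closed2 N (r : nat -> U) : r 0%N = 1 -> r 1%N = b ->
  (forall m, r m.+2 = b * r m.+1 + (e * r m) *+ 2 *+ m.+1) ->
  forall k, (k < N)%N -> r k = Dg 2 N k *+ k`!.
Proof.
move=> r0 r1 rS.
suff: forall k, ((k < N)%N -> r k = Dg 2 N k *+ k`!) /\
                ((k.+1 < N)%N -> r k.+1 = Dg 2 N k.+1 *+ k.+1`!) by move=> h k; case: (h k).
elim=> [|k [h1 h2]].
  by split=> hN; rewrite ?D0 ?D2_1 ?r0 ?r1 ?mulr1n //; lia.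
split => // hk; rewrite rS h2 ?(ltnW hk) // h1 ?(ltnW (ltnW hk)) //.
rewrite !mulrnAr (factS k.+1) (mulrnA (Dg 2 N k.+2)) -D2S // [RHS]mulrnDl; congr (_ + _).
rewrite -!mulrnA; congr (_ *+ _); rewrite factS; nia.
Qed.

Lemma sum_if_eq N m (F : nat -> U) :
  \sum_(i < N) (if m == (i : nat) then F i else 0) = if (m < N)%N then F m else 0.
Proof.
elim: N => [|N IH]; first by rewrite big_ord0.
rewrite big_ord_recr /= IH.
case: (ltngtP m N) => h.
- by rewrite addr0 ltnS (ltnW h).
- by rewrite addr0 ltnS leqNgt h.
- by rewrite add0r h ltnSn.
Qed.

Lemma sumDg w N : \sum_(k < N) Dg w N k =
  \sum_(i < N) \sum_(j < N) (if (i + w * j < N)%N then H i j else 0).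
Proof.
rewrite /Dg exchange_big /=; apply eq_bigr => i _; rewrite exchange_big /=.
apply eq_bigr => j _; exact: (@sum_if_eq N (i + w * j)%N (fun=> H i j)).
Qed.

Lemma diffD N : \sum_(k < N) Dg 1 N k - \sum_(k < N) Dg 2 N k =
  \sum_(i < N) \sum_(j < N)
     (if (i + j < N)%N && ~~ (i + 2 * j < N)%N then H i j else 0).
Proof.
rewrite !sumDg -sumrB; apply eq_bigr => i _; rewrite -sumrB; apply eq_bigr => j _.
rewrite mul1n; case h1: (i + j < N)%N; case h2: (i + 2 * j < N)%N => /=;
  rewrite ?subrr ?subr0 ?sub0r //.
exfalso; move: h1 h2; lia.
Qed.

End Comb.

Section Main.
Variables (K : fieldType) (g : lmodType K) (br : g -> g -> g)
  (U : algType K) (iota : g -> U) (R : g -> g) (RR : U -> U).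
Hypotheses (hK : [pchar K] =i pred0) (hbr : is_lie_bracket br)
  (hnil : forall x y z : g, br x (br y z) = 0)
  (hRf : forall (n : nat) (x : g), lcs br n x -> lcs br n (R x))
  (henv : is_envelope br iota) (hRR : RB_ext iota R RR).

Lemma brDl x y z : br (x + y) z = br x z + br y z.
Proof. by case: hbr => hl _ _ _; have := hl 1 x y z; rewrite !scale1r. Qed.
Lemma brDr x y z : br z (x + y) = br z x + br z y.
Proof. by case: hbr => _ hr _ _; have := hr 1 x y z; rewrite !scale1r. Qed.
Lemma br0l z : br 0 z = 0.
Proof.
case: hbr => hl _ _ _; have := hl (-1) z z z.
by rewrite !scaleN1r !addNr.
Qed.
Lemma br0r z : br z 0 = 0.
Proof.
case: hbr => _ hr _ _; have := hr (-1) z z z.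
by rewrite !scaleN1r !addNr.
Qed.
Lemma brA x y : br x y = - br y x.
Proof.
case: hbr => _ _ halt _; have h := halt (x + y).
rewrite brDl !brDr !halt add0r addr0 in h; apply/eqP; by rewrite -addr_eq0 h.
Qed.
Lemma lcs2_r u w : lcs br 2 u -> br w u = 0.
Proof.
move=> [s [_ ->]]; elim: s => [|p s IH]; first by rewrite big_nil br0r.
by rewrite big_cons brDr hnil IH addr0.
Qed.
Lemma lcs2_l u w : lcs br 2 u -> br u w = 0.
Proof. by move=> h; rewrite brA lcs2_r // oppr0. Qed.

Lemma iotaD u v : iota (u + v) = iota u + iota v.
Proof. by case: henv => [[hl _] _]; have := hl 1 u v; rewrite !scale1r. Qed.
Lemma iota0 : iota 0 = 0.
Proof. by case: henv => [[hl _] _]; have := hl (-1) 0 0; rewrite !scaleN1r !addNr. Qed.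
Lemma iotaZ a u : iota (a *: u) = a *: iota u.
Proof. by case: henv => [[hl _] _]; have := hl a u 0; rewrite !addr0 iota0 addr0. Qed.
Lemma iota_comm u v : br u v = 0 -> iota u * iota v = iota v * iota u.
Proof.
case: henv => [[_ hb] _] h; have := hb u v; rewrite h iota0 => /eqP.
by rewrite eq_sym subr_eq0 => /eqP.
Qed.

Lemma RRD u v : RR (u + v) = RR u + RR v.
Proof. by case: hRR => hl _ _ _; have := hl 1 u v; rewrite !scale1r. Qed.
Lemma RR0 : RR 0 = 0.
Proof. by case: hRR => hl _ _ _; have := hl (-1) 0 0; rewrite !scaleN1r !addNr. Qed.
Lemma RRZ a u : RR (a *: u) = a *: RR u.
Proof. by case: hRR => hl _ _ _; have := hl a u 0; rewrite !addr0 RR0 addr0. Qed.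
Lemma RRB u v : RR (u - v) = RR u - RR v.
Proof. by rewrite RRD -scaleN1r RRZ scaleN1r. Qed.
Lemma RRMn u n : RR (u *+ n) = RR u *+ n.
Proof. elim: n => [|n IH]; first by rewrite !mulr0n RR0. by rewrite !mulrS RRD IH. Qed.

Lemma fU0 n : filtU br iota n 0.
Proof. by exists [::]; split=> //; rewrite big_nil. Qed.
Lemma fUD n u v : filtU br iota n u -> filtU br iota n v -> filtU br iota n (u + v).
Proof.
move=> [s1 [h1 ->]] [s2 [h2 ->]]; exists (s1 ++ s2); split; last by rewrite big_cat.
by move=> w; rewrite mem_cat => /orP [/h1|/h2].
Qed.
Lemma fUZ n k u : filtU br iota n u -> filtU br iota n (k *: u).
Proof.
move=> [s [h ->]]; exists [seq (k * w.1, w.2) | w <- s]; split.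
  by move=> w /mapP [w' hw' ->] /=; exact: h.
by rewrite big_map scaler_sumr; apply eq_bigr => w _; rewrite scalerA.
Qed.
Lemma fUsum n N (F : 'I_N -> U) : (forall i, filtU br iota n (F i)) ->
  filtU br iota n (\sum_(i < N) F i).
Proof. by move=> h; apply: big_ind => //; [exact: fU0 | exact: fUD]. Qed.

Lemma prod_nseq m (q : nat * g) : \prod_(p <- nseq m q) iota p.2 = iota q.2 ^+ m.
Proof. by elim: m => [|m IH]; rewrite ?big_nil ?expr0 // big_cons IH exprS. Qed.
Lemma sum_nseq m (q : nat * g) : (\sum_(p <- nseq m q) p.1 = m * q.1)%N.
Proof. by elim: m => [|m IH]; rewrite ?big_nil // big_cons IH mulSn. Qed.

Lemma fUword n (u v : g) i j : lcs br 2 v -> (n <= i + 2 * j)%N ->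
  filtU br iota n (iota u ^+ i * iota v ^+ j).
Proof.
move=> hv hn; exists [:: (1, nseq i (1%N, u) ++ nseq j (2%N, v))]; split.
  move=> w; rewrite mem_seq1 => /eqP -> /=; split.
    by move=> p; rewrite mem_cat => /orP [] /nseqP [-> _].
  by rewrite big_cat /= !sum_nseq /= muln1 mulnC.
by rewrite big_seq1 scale1r big_cat /= !prod_nseq.
Qed.

Lemma mainL x n : let y := R x - (2%:R : K)^-1 *: R (br (R x) x) in
  filtU br iota n (exp_trunc n (iota y) - RR (exp_trunc n (iota x))).
Proof.
move=> y.
set a := iota x. set b := iota (R x). set z := br (R x) x. set c := iota z.
set d := iota (R z). set s := (2%:R : K)^-1. set e := - (s *: d).
have lz : lcs br 2 z by exists [:: (R x, x)]; split; [move=> p _ | rewrite big_seq1].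
have lRz := hRf lz.
have s2 : s *+ 2 = 1 by rewrite -mulr_natr mulVf //; exact: (natK_neq0 hK).
have hca : c * a = a * c by apply: iota_comm; apply: lcs2_l.
have hba : b * a - a * b = c by case: henv => [[_ hb] _]; rewrite /c /z hb.
have hda : d * a = a * d by apply: iota_comm; apply: lcs2_l.
have hdb : d * b = b * d by apply: iota_comm; apply: lcs2_l.
have hbe : GRing.comm b e by rewrite /GRing.comm /e mulrN mulNr -scalerAr -scalerAl hdb.
have hpow m : b * a ^+ m.+1 - a ^+ m.+1 * b = (c * a ^+ m) *+ m.+1.
  elim: m => [|m IH]; first by rewrite expr1 expr0 mulr1 mulr1n.
  rewrite exprSr.
  have -> : b * (a ^+ m.+1 * a) - (a ^+ m.+1 * a) * b =
     (b * a ^+ m.+1 - a ^+ m.+1 * b) * a + a ^+ m.+1 * (b * a - a * b).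
    by rewrite mulrBl mulrBr !mulrA addrA subrK.
  rewrite IH hba mulrnAl -mulrA -exprSr -(commrX m.+1 hca).
  by rewrite [RHS]mulrSr.
have hRRc m : RR (c * a ^+ m) = d * RR (a ^+ m).
  case: hRR => _ _ _ hm; rewrite /c hm -/d (commrX m hda) subrr RR0 subr0 //.
have hrec m : RR (a ^+ m.+2) = b * RR (a ^+ m.+1) + (e * RR (a ^+ m)) *+ 2 *+ m.+1.
  case: hRR => _ _ _ hm; rewrite exprS hm -/b hpow RRMn hRRc.
  congr (_ + _); rewrite -mulNrn; congr (_ *+ _).
  by rewrite /e mulNr mulNrn -scalerAl scalerMnl s2 scale1r.
have hclosed : forall k, (k < n)%N -> RR (a ^+ k) = Dg b e 2 n k *+ k`!.
  apply: (closed2 hK hbe).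
  - by case: hRR => _ h1 _ _; rewrite expr0.
  - by case: hRR => _ _ h1 _; rewrite expr1 /a h1.
  - exact: hrec.
have hy : iota y = b + e.
  rewrite /y -/z -/s.
  have -> : R x - s *: R z = (- s) *: R z + R x by rewrite scaleNr addrC.
  by case: henv => [[hl _] _]; rewrite hl -/b -/d scaleNr addrC.
rewrite hy /exp_trunc.
have E1 : \sum_(k < n) (k`!%:R : K)^-1 *: (b + e) ^+ k = \sum_(k < n) Dg b e 1 n k.
  apply eq_bigr => k _; rewrite (powbe hK hbe (ltn_ord k)) -scaler_nat scalerA mulVf ?scale1r //.
  by apply: (natK_neq0 hK); rewrite -lt0n fact_gt0.
have E2 : RR (\sum_(k < n) (k`!%:R : K)^-1 *: a ^+ k) = \sum_(k < n) Dg b e 2 n k.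
  rewrite (big_morph RR RRD RR0); apply eq_bigr => k _.
  rewrite RRZ hclosed // -scaler_nat scalerA mulVf ?scale1r //.
  by apply: (natK_neq0 hK); rewrite -lt0n fact_gt0.
rewrite E1 E2 diffD.
apply: fUsum => i; apply: fUsum => j; case: ifP => [/andP [_ h] | _]; last exact: fU0.
rewrite /H /e -scaleNr exprZn -scalerAr; apply: fUZ; apply: fUZ.
by apply: fUword => //; rewrite leqNgt.
Qed.

End Main.

Theorem proposition4p15 (K : fieldType) (g : lmodType K) (br : g -> g -> g)
  (U : algType K) (iota : g -> U) (R : g -> g) (RR : U -> U) :
  [pchar K] =i pred0 ->
  is_lie_bracket br ->
  (forall x y z : g, br x (br y z) = 0) ->
  rota_baxter1 br R ->
  (forall (n : nat) (x : g), lcs br n x -> lcs br n (R x)) ->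
  is_envelope br iota ->
  RB_ext iota R RR ->
  forall x : g,
    let y := R x - (2%:R : K)^-1 *: R (br (R x) x) in
    forall n : nat,
      filtU br iota n (exp_trunc n (iota y) - RR (exp_trunc n (iota x))).
Proof.
move=> hK hbr hnil _ hRf henv hRR x y n.
exact: (mainL hK hbr hnil hRf henv hRR x n).
Qed.
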